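(* Let $G$ be a locally compact Hausdorff group acting continuously on a locally compact Hausdorff space $X$, and let $\alpha$ be the induced action on $C_0(X)$, $(\alpha_gf)(x)=f(xg)$. The $G$-action on $X$ is free if and only if $$\mathrm{span}\{f_1\alpha_{(\cdot)}(f_2): f_1,f_2\in C_c(X)\}$$ is dense in $C(G,C(X))$ for the $\kappa$-topology, where $(f_1\alpha_{(\cdot)}(f_2))(g)=f_1\alpha_g(f_2)$.
   Context: $C_c(X)$ is the algebra of compactly supported continuous functions, $C(X)$ all continuous complex functions with the compact-open topology (seminorms $p_L(h)=\sup_{x\in L}|h(x)|$, $L$ compact). $C(G,C(X))$ is the $*$-algebra of continuous maps $G\to C(X)$ with the $\kappa$-topology given by the seminorms $u\mapsto\sup_{g\in K}p_L(u(g))$, $K\subseteq G$, $L\subseteq X$ compact. The action is free if $xg=x$ implies $g=e$. *)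

(* Defs.v *)
(* Complex scalars: C := (R[i])^o for R : realType,
   carrying the normed/topological structure of a numClosedFieldType. *)
From HB Require Import structures.
From mathcomp Require Import all_boot all_order all_algebra.
From mathcomp Require Import all_classical all_reals all_analysis.
From mathcomp Require Import complex.
Import numFieldTopology.Exports numFieldNormedType.Exports.
Set Implicit Arguments. Unset Strict Implicit. Unset Printing Implicit Defensive.
Import Order.TTheory GRing.Theory Num.Theory.
Local Open Scope ring_scope.
Local Open Scope classical_set_scope.

Definition Cplx (R : realType) : normedModType R[i] := (R[i])^o.

Definition is_topological_group (G : topologicalType)
  (mul : G -> G -> G) (inv : G -> G) (e : G) : Prop :=
  [/\ (forall a b c, mul a (mul b c) = mul (mul a b) c),
      (forall a, mul e a = a /\ mul a e = a),
      (forall a, mul (inv a) a = e /\ mul a (inv a) = e),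
      continuous (fun p : G * G => mul p.1 p.2)
    & continuous inv].

Definition is_continuous_right_action (G X : topologicalType)
  (mul : G -> G -> G) (e : G) (act : X -> G -> X) : Prop :=
  [/\ (forall x, act x e = x),
      (forall x g h, act (act x g) h = act x (mul g h))
    & continuous (fun p : X * G => act p.1 p.2)].

Definition free_action (G X : Type) (e : G) (act : X -> G -> X) : Prop :=
  forall x g, act x g = x -> g = e.

Definition Cc (R : realType) (X : topologicalType) (f : X -> Cplx R) : Prop :=
  continuous f /\ compact (closure [set x | f x != 0]).

(* C(G, C(X)) with C(X) carrying the compact-open topology, given by the
   seminorms p_L(h) = sup_{x in L} |h x| : u g is continuous for each g, and
   g |-> u g is continuous for every seminorm p_L. *)
Definition CGCX (R : realType) (G X : topologicalType) (u : G -> X -> Cplx R) : Prop :=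
  (forall g, continuous (u g)) /\
  (forall (g0 : G) (L : set X) (eps : R), compact L -> 0 < eps ->
     \forall g \near g0, forall x, L x -> `|u g x - u g0 x| <= (eps%:C)%C).

(* span{ f1 alpha_(.)(f2) : f1, f2 in C_c(X) }, where
   (f1 alpha_(.)(f2))(g) = x |-> f1 x * f2 (x g) *)
Definition alpha_span (R : realType) (G X : topologicalType)
  (act : X -> G -> X) (v : G -> X -> Cplx R) : Prop :=
  exists (n : nat) (c : 'I_n -> Cplx R) (f1 f2 : 'I_n -> X -> Cplx R),
    (forall i, Cc (f1 i) /\ Cc (f2 i)) /\
    v = (fun g x => \sum_(i < n) c i * (f1 i x * f2 i (act x g))).

(* density of a set S of C(G,C(X)) in the kappa-topology, given by the
   seminorms u |-> sup_{g in K} p_L(u g), K, L compact (a directed family) *)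
Definition kappa_dense (R : realType) (G X : topologicalType)
  (S : (G -> X -> Cplx R) -> Prop) : Prop :=
  forall u, CGCX u ->
  forall (K : set G) (L : set X) (eps : R), compact K -> compact L -> 0 < eps ->
  exists v, S v /\ forall g x, K g -> L x -> `|u g x - v g x| <= (eps%:C)%C.

(* Main.v *)
Require Import Defs.
From HB Require Import structures.
From mathcomp Require Import all_boot all_order all_algebra.
From mathcomp Require Import all_classical all_reals all_analysis.
From mathcomp Require Import complex.
From mathcomp Require Import ring lra finmap.
Import numFieldTopology.Exports numFieldNormedType.Exports.
Set Implicit Arguments. Unset Strict Implicit. Unset Printing Implicit Defensive.
Import Order.TTheory GRing.Theory Num.Theory.
Local Open Scope ring_scope.
Local Open Scope classical_set_scope.
Section S.
Variable R : realType.
Lemma normC_real (r : R) : `|(r%:C)%C : R[i]| = (`|r|%:C)%C.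
Proof. rewrite normc_def /= expr0n addr0 sqrtr_sqr //. Qed.

Lemma posC_real (e : R[i]) : 0 < e -> 0 < complex.Re e /\ e = ((complex.Re e)%:C)%C.
Proof.
rewrite ltcE => /andP[/eqP + ]; case: e => a b /= -> ->; split => //.
Qed.

Lemma real_complex_continuous : continuous (fun r : R => (r%:C)%C : Cplx R).
Proof.
move=> r; apply/cvgrPdist_lt => e /posC_real [e1 eE].
near=> s.
rewrite /= -raddfB /= normC_real eE ltcR.
near: s. exists (complex.Re e) => //= s.
Unshelve. all: by end_near.
Qed.
End S.

Definition ptX (X : topologicalType) (x0 : X) : Type := X.
HB.instance Definition _ (X : topologicalType) (x0 : X) :=
  Topological.copy (ptX x0) X.
HB.instance Definition _ (X : topologicalType) (x0 : X) :=
  isPointed.Build (ptX x0) x0.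
Lemma compact_cover_np (X : topologicalType) (A : set X) : compact A ->
  forall (I : choiceType) (D : set I) (f : I -> set X),
  (forall i, D i -> open (f i)) -> A `<=` cover D f -> finite_subset_cover D f A.
Proof.
move=> cA I D f of_ Af.
have [A0|/set0P [x0 Ax0]] := eqVneq A set0.
  by exists fset0 => //; rewrite A0.
have : @compact (ptX x0) A by [].
rewrite compact_cover; apply => //.
Qed.

Lemma fst_continuous (T U : topologicalType) : continuous (@fst T U).
Proof. by move=> p; exact: cvg_fst. Qed.
Lemma snd_continuous (T U : topologicalType) : continuous (@snd T U).
Proof. by move=> p; exact: cvg_snd. Qed.

Lemma bump_exists (R : realType) (X : topologicalType) :
  locally_compact [set: X] -> hausdorff_space X ->
  forall (x : X) (N : set X), nbhs x N ->
  exists psi : X -> R, [/\ continuous psi, (forall y, 0 <= psi y), psi x = 1,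
    (forall y, psi y != 0 -> N y) & compact (closure [set y | psi y != 0])].
Proof.
move=> lcX hX x N Nx.
have [U] := lcX x I; rewrite withinET => Ux [cU clU].
pose O := (N `&` U)°.
have Ox : nbhs x O by apply: nbhs_interior; exact: filterI.
pose B := ~` O.
have clB : closed B by rewrite /B closedC; exact: open_interior.
have nBx : ~ B x by rewrite /B /= => /(_ (nbhs_singleton Ox)).
have sep := @locally_compact_completely_regular X R lcX hX x B clB nBx.
pose f := @Urysohn X R [set x] B.
have f0 : f x = 0 by apply: (Urysohn_sub0 sep); exists x.
have f1 : forall y, B y -> f y = 1 by move=> y By; apply: (Urysohn_sub1 sep); exists y.
have fc : continuous f := @Urysohn_continuous X R _ _.
have nzO : forall y, Num.max 0 (1 - 2 * f y) != 0 -> O y.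
  move=> y ne; apply: contrapT => Ny; move: ne.
  rewrite f1 // mulr1 /Num.max; case: ifP => h; [move=> _; lra | by rewrite eqxx].
exists (fun y => Num.max 0 (1 - 2 * f y)); split.
- move=> y; apply: (@continuous_max _ _ (fun=> 0) (fun y => 1 - 2 * f y)).
    exact: cvg_cst.
  apply: cvgB; first exact: cvg_cst.
  by apply: cvgM; [exact: cvg_cst | exact: fc].
- by move=> y; rewrite le_max lexx.
- by rewrite f0 mulr0 subr0 /Num.max ltr01.
- by move=> y /nzO /interior_subset [].
- apply: (subclosed_compact (@closed_closure _ _) cU).
  have sO : [set y | Num.max 0 (1 - 2 * f y) != 0] `<=` U.
    by move=> y /nzO /interior_subset [].
  apply: subset_trans (closureS sO) _; rewrite -(proj1 (closure_id U) clU).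
  done.
Qed.

Lemma partition_exists (R : realType) (X : topologicalType) :
  locally_compact [set: X] -> hausdorff_space X ->
  forall (S : set X) (N : X -> set X), compact S -> (forall x, S x -> nbhs x (N x)) ->
  exists n (phi : 'I_n -> X -> R) (c : 'I_n -> X),
    [/\ (forall i, continuous (phi i)), (forall i y, 0 <= phi i y),
        (forall i y, phi i y != 0 -> N (c i) y),
        (forall i, compact (closure [set y | phi i y != 0])) &
        (forall y, S y -> \sum_(i < n) phi i y = 1)].
Proof.
move=> lcX hX S N cS NS.
have : forall x, exists psi : X -> R, S x ->
    [/\ continuous psi, (forall y, 0 <= psi y), psi x = 1,
    (forall y, psi y != 0 -> N x y) & compact (closure [set y | psi y != 0])].
  move=> x; case: (pselect (S x)) => Sx; last by exists (fun=> 0).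
  by have [psi Hpsi] := bump_exists R lcX hX (NS x Sx); exists psi.
move=> /choice [Psi HPsi].
pose O x := Psi x @^-1` [set r | 2^-1 < r].
have oO : forall x, S x -> open (O x).
  move=> x Sx; have [cP _ _ _ _] := HPsi x Sx.
  by apply: open_comp => [y _|]; [exact: cP | exact: open_gt].
have SO : S `<=` cover S O.
  move=> y Sy; exists y => //; have [_ _ h1 _ _] := HPsi y Sy.
  rewrite /O /preimage /= h1; lra.
have [D' D'S SD'] := compact_cover_np cS oO SO.
pose s := enum_fset D'.
pose n := size s.
pose c (i : 'I_n) := tnth (in_tuple s) i.
have cS' : forall i, S (c i).
  move=> i; suff : c i \in S by rewrite in_setE.
  apply: D'S; rewrite /c (tnth_nth (c i)) /=.
  by have := mem_nth (c i) (ltn_ord i).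
have H := fun i => HPsi _ (cS' i).
pose sigma y := \sum_(i < n) 2 * Psi (c i) y.
have sig_ge0 : forall y, 0 <= sigma y.
  move=> y; apply: sumr_ge0 => i _; have [_ + _ _ _] := H i.
  by move=> /(_ y) h; rewrite mulr_ge0.
have sig1 : forall y, S y -> 1 <= sigma y.
  move=> y Sy; have [x xD' Oxy] := SD' y Sy.
  have xs : x \in s by [].
  have xi : (index x s < n)%N by rewrite index_mem.
  pose i := Ordinal xi.
  have ci : c i = x by rewrite /c (tnth_nth x) /= nth_index.
  have h1 : 1 < 2 * Psi x y by move: Oxy; rewrite /O /preimage /=; lra.
  apply: le_trans (ltW h1) _.
  rewrite /sigma (bigD1 i) //= ci lerDl; apply: sumr_ge0 => j _.
  by have [_ + _ _ _] := H j => /(_ y) h; rewrite mulr_ge0.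
pose phi (i : 'I_n) y := 2 * Psi (c i) y / Num.max 1 (sigma y).
have max_gt0 : forall y, 0 < Num.max 1 (sigma y) by move=> y; rewrite lt_max ltr01.
exists n, phi, c; split.
- move=> i y; apply: (@continuousM _ _ (fun y => 2 * Psi (c i) y)
       (fun y => (Num.max 1 (sigma y))^-1)).
    apply: (@continuousM _ _ (fun=> 2) (Psi (c i))); first exact: cvg_cst.
    by have [+ _ _ _ _] := H i; apply.
  apply: (@continuousV _ _ (fun y => Num.max 1 (sigma y))); first by rewrite gt_eqF.
  apply: (@continuous_max _ _ (fun=> 1) sigma); first exact: cvg_cst.
  apply: (@continuous_big _ _ +%R 0 xpredT _ _ _ (fun i y => 2 * Psi (c i) y)).
    exact: add_continuous.
  move=> j _ z; apply: (@continuousM _ _ (fun=> 2) (Psi (c j))); first exact: cvg_cst.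
  by have [+ _ _ _ _] := H j; apply.
- move=> i y; rewrite /phi divr_ge0 ?(ltW (max_gt0 y)) // mulr_ge0 //.
  by have [_ + _ _ _] := H i.
- move=> i y; rewrite /phi => ne; have [_ _ _ + _] := H i; apply.
  by apply: contraNneq ne => ->; rewrite mulr0 mul0r.
- move=> i; have [_ _ _ _ +] := H i.
  have two0 : (2:R) != 0 by apply/negP => /eqP; lra.
  suff -> : [set y | phi i y != 0] = [set y | Psi (c i) y != 0] by [].
  apply/funext => y /=.
  by rewrite /phi mulf_eq0 invr_eq0 (gt_eqF (max_gt0 y)) orbF mulf_eq0 (negbTE two0).
- move=> y Sy; rewrite /phi -mulr_suml -/(sigma y).
  have -> : Num.max 1 (sigma y) = sigma y by apply/max_idPr; exact: sig1.
  by rewrite divff // gt_eqF // (lt_le_trans ltr01 (sig1 y Sy)).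
Qed.

Lemma halfC (R : realType) (r : R) : ((r/2)%:C + (r/2)%:C)%C = (r%:C)%C :> R[i].
Proof. by rewrite -raddfD /= -splitr. Qed.

Lemma sep_points (X : topologicalType) : locally_compact [set: X] -> hausdorff_space X ->
  forall x y : X, x != y -> exists U1 U2 : set X,
    [/\ open U1, open U2, U1 x, U2 y & closure U1 `&` closure U2 = set0].
Proof.
move=> lcX hX x y xy.
have hX' := hX; rewrite open_hausdorff in hX'.
have [ [P1 P2] ] := hX' x y xy.
move=> /= [x1 y2] [opP1 opP2 P12].
move: x1 y2 P12 => /set_mem x1 /set_mem y2 /eqP P12.
have shrink : forall (z : X) (O : set X), open O -> O z ->
    exists U, [/\ open U, U z & closure U `<=` O].
  move=> z O oO Oz.
  have [V] := lcX z I; rewrite withinET => Vz [cV clV].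
  have reg := compact_regular hX cV Vz.
  have [W Wz WO] := reg O (open_nbhs_nbhs (conj oO Oz)).
  exists W°; split; first exact: open_interior.
    exact: nbhs_singleton (nbhs_interior Wz).
  exact: subset_trans (closureS (@interior_subset _ _)) WO.
have [U1 [oU1 U1x cU1]] := shrink x P1 opP1 x1.
have [U2 [oU2 U2y cU2]] := shrink y P2 opP2 y2.
exists U1, U2; split => //.
apply/seteqP; split => // z [/cU1 z1 /cU2 z2].
by rewrite -P12; split.
Qed.

Lemma CGCX_cont (R : realType) (G X : topologicalType) (u : G -> X -> Cplx R) :
  locally_compact [set: X] -> CGCX u -> continuous (fun p : X * G => u p.2 p.1).
Proof.
move=> lcX [uc ug] [x0 g0]; apply/cvgrPdist_le => e /posC_real [e1 eE].
have [V] := lcX x0 I; rewrite withinET => Vx [cV clV].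
have e2 : 0 < complex.Re e / 2 by rewrite divr_gt0.
have e2C : 0 < ((complex.Re e / 2)%:C)%C :> R[i] by rewrite ltcR.
have hg := ug g0 V _ cV e2.
have hx := (cvgrPdist_le _ _).1 (uc g0 x0) _ e2C.
exists (V `&` [set x | `|u g0 x0 - u g0 x| <= ((complex.Re e / 2)%:C)%C],
        [set g | forall x, V x -> `|u g x - u g0 x| <= ((complex.Re e / 2)%:C)%C]).
  split => /=; [apply: filterI => //; apply: hx | exact: hg].
move=> [x g] /= [ [Vx' hx'] hg'].
rewrite eE -halfC; apply: le_trans (ler_distD (u g0 x) _ _) _.
by rewrite addrC lerD // distrC; apply: hg'.
Qed.


Lemma open_pre2 (T U : topologicalType) (f g : T -> U) (A B : set U) :
  continuous f -> continuous g -> open A -> open B ->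
  open [set w | A (f w) /\ B (g w)].
Proof.
move=> cf cg oA oB.
have -> : [set w | A (f w) /\ B (g w)] = f @^-1` A `&` g @^-1` B by [].
apply: openI.
  by apply: open_comp => // x _; exact: cf.
by apply: open_comp => // x _; exact: cg.
Qed.

Lemma nbhs_notcl (T : topologicalType) (C : set T) (x : T) :
  nbhs x [set y | ~ closure C x -> ~ closure C y].
Proof.
case: (pselect (closure C x)) => h.
  by apply: filterS filterT => y _ /(_ h).
apply: open_nbhs_nbhs; split => //.
have -> : [set y | ~ closure C x -> ~ closure C y] = ~` closure C.
  by apply/funext => y /=; apply/propext; split => [/(_ h)|].
by rewrite openC; exact: closed_closure.
Qed.

Lemma realC_eq0 (R : realType) (r : R) : (((r%:C)%C : R[i]) == 0) = (r == 0).
Proof. by rewrite eq_complex /= eqxx andbT. Qed.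

Lemma free_dense (R : realType) (G X : topologicalType)
  (mul : G -> G -> G) (inv : G -> G) (e : G) (act : X -> G -> X) :
  is_topological_group mul inv e ->
  hausdorff_space X -> locally_compact [set: X] ->
  is_continuous_right_action mul e act ->
  free_action e act -> kappa_dense (@alpha_span R G X act).
Proof.
move=> [mA me mi _ _] hX lcX [a1 aM ac] fr u uC K L eps cK cL eps0.
pose U (p : X * G) := u p.2 p.1.
have Uc : continuous U := CGCX_cont lcX uC.
pose actp (p : X * G) := act p.1 p.2.
have actc : continuous actp := ac.
pose P := L `*` K.
have cP : compact P := compact_setX cL cK.
have inj : forall p q : X * G, p.1 = q.1 -> actp p = actp q -> p = q.
  case=> x g [x' g'] /= <- h; congr pair; rewrite /actp /= in h.
  have h2 : act x (mul g (inv g')) = x.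
    by rewrite -aM h aM (proj2 (mi g')) a1.
  have := fr _ _ h2 => h3.
  by rewrite -(proj2 (me g)) -(proj1 (mi g')) mA h3 (proj1 (me g')).
pose epsC : Cplx R := (eps%:C)%C.
have eh : 0 < ((eps / 2)%:C)%C :> R[i] by rewrite ltcR divr_gt0.
have data : forall z : (X * G) * (X * G),
  exists d : set ((X * G) * (X * G)) * (nat * (set X * set X)),
  [/\ open d.1, d.1 z,
      (d.2.1 = 0%N -> forall w, d.1 w -> `|U w.1 - U w.2| <= epsC),
      (d.2.1 != 0%N -> closure d.2.2.1 `&` closure d.2.2.2 = set0) &
      ((d.2.1 = 1%N -> forall w, d.1 w -> d.2.2.1 w.1.1 /\ d.2.2.2 w.2.1) /\
      ((1 < d.2.1)%N -> forall w, d.1 w -> d.2.2.1 (actp w.1) /\ d.2.2.2 (actp w.2)))].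
  move=> [p p']; case: (eqVneq p p') => [<-|pp'].
    have hU : nbhs p [set q | `|U p - U q| <= ((eps/2)%:C)%C].
      exact: (cvgrPdist_le _ _).1 (Uc p) _ eh.
    move: hU; rewrite nbhsE => -[V [oV Vp] VS].
    exists ([set w | V w.1 /\ V w.2], (0%N, (set0, set0))); split => //=.
    - apply: open_pre2 => //; [exact: fst_continuous | exact: snd_continuous].
    - move=> _ w [/VS h1 /VS h2]; rewrite /epsC -halfC.
      apply: le_trans (ler_distD (U p) _ _) _.
      by rewrite lerD // distrC.
  have [h1|h1] : p.1 != p'.1 \/ actp p != actp p'.
    case: (eqVneq p.1 p'.1) => h; last by left.
    by right; apply/eqP => h2; move/eqP: pp'; apply; exact: inj.
  - have [U1 [U2 [oU1 oU2 U1p U2p cl12]]] := sep_points lcX hX h1.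
    exists ([set w | U1 w.1.1 /\ U2 w.2.1], (1%N, (U1, U2))); split => //=.
    apply: (@open_pre2 _ _ (fun w => w.1.1) (fun w => w.2.1)) => // w.
      by apply: (@continuous_comp _ _ _ fst fst); apply: fst_continuous.
    by apply: (@continuous_comp _ _ _ snd fst); [apply: snd_continuous | apply: fst_continuous].
  - have [U1 [U2 [oU1 oU2 U1p U2p cl12]]] := sep_points lcX hX h1.
    exists ([set w | U1 (actp w.1) /\ U2 (actp w.2)], (2%N, (U1, U2))); split => //=.
    apply: (@open_pre2 _ _ (fun w => actp w.1) (fun w => actp w.2)) => // w.
      by apply: (@continuous_comp _ _ _ fst actp); [apply: fst_continuous | apply: actc].
    by apply: (@continuous_comp _ _ _ snd actp); [apply: snd_continuous | apply: actc].
have [F HF] := choice data.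
pose Q := P `*` P.
have cQ : compact Q := compact_setX cP cP.
have [D' D'Q QD'] : finite_subset_cover Q (fun z => (F z).1) Q.
  apply: (compact_cover_np cQ) => [z _|z Qz]; first by have [] := HF z.
  by exists z => //; have [] := HF z.
pose A (x : X) := \bigcap_(z in [set` D']) [set y | (F z).2.1 = 1%N ->
   (~ closure (F z).2.2.1 x -> ~ closure (F z).2.2.1 y) /\
   (~ closure (F z).2.2.2 x -> ~ closure (F z).2.2.2 y)].
pose B (x : X) := \bigcap_(z in [set` D']) [set y | (1 < (F z).2.1)%N ->
   (~ closure (F z).2.2.1 x -> ~ closure (F z).2.2.1 y) /\
   (~ closure (F z).2.2.2 x -> ~ closure (F z).2.2.2 y)].
have nbA : forall x, nbhs x (A x).
  move=> x; apply: filter_bigI => z _.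
  apply: filterS (filterI (nbhs_notcl (F z).2.2.1 x) (nbhs_notcl (F z).2.2.2 x)).
  by move=> y [].
have nbB : forall x, nbhs x (B x).
  move=> x; apply: filter_bigI => z _.
  apply: filterS (filterI (nbhs_notcl (F z).2.2.1 x) (nbhs_notcl (F z).2.2.2 x)).
  by move=> y [].
have key : forall x0 y0 q q', P q -> P q' -> A x0 q.1 -> A x0 q'.1 ->
    B y0 (actp q) -> B y0 (actp q') -> `|U q - U q'| <= epsC.
  move=> x0 y0 q q' Pq Pq' Aq Aq' Bq Bq'.
  have [z zD' Wz] := QD' (q, q') (conj Pq Pq').
  have [_ _ h0 hd [h1 h2]] := HF z.
  have [k1|k1|k1] := ltngtP (F z).2.1 1%N.
  - have k0 : (F z).2.1 = 0%N by move: k1; case: ((F z).2.1).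
    exact: (h0 k0 (q, q') Wz).
  - have [u1 u2] := h2 k1 _ Wz.
    have [c1 _] := Bq z zD' k1.
    have [_ c2] := Bq' z zD' k1.
    have : (closure (F z).2.2.1 `&` closure (F z).2.2.2) y0.
      split; apply: contrapT; [move/c1|move/c2]; apply; exact: subset_closure.
    have k0 : (F z).2.1 != 0%N by rewrite -lt0n (ltn_trans _ k1).
    by rewrite hd.
  - have [u1 u2] := h1 k1 _ Wz.
    have [c1 _] := Aq z zD' k1.
    have [_ c2] := Aq' z zD' k1.
    have : (closure (F z).2.2.1 `&` closure (F z).2.2.2) x0.
      split; apply: contrapT; [move/c1|move/c2]; apply; exact: subset_closure.
    by rewrite hd // k1.
have [nA [phi [cA [phic phi0 phiN phiC phi1]]]] :=
  partition_exists R lcX hX cL (fun x _ => nbA x).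
pose M := actp @` P.
have cM : compact M := continuous_compact (@continuous_subspaceT _ _ P actp actc) cP.
have [nB [chi [cB [chic chi0 chiN chiC chi1]]]] :=
  partition_exists R lcX hX cM (fun y _ => nbB y).
have coef : forall ij : 'I_nA * 'I_nB, exists c : Cplx R, forall q, P q ->
    phi ij.1 q.1 != 0 -> chi ij.2 (actp q) != 0 -> `|U q - c| <= epsC.
  move=> [i j].
  case: (pselect (exists q0, [/\ P q0, phi i q0.1 != 0 & chi j (actp q0) != 0])).
    case=> q0 [Pq0 h1 h2]; exists (U q0) => q Pq g1 g2 /=.
    by apply: (key (cA i) (cB j)) => //; [exact: phiN | exact: phiN | exact: chiN | exact: chiN].
  by move=> nq; exists 0 => q Pq g1 g2; exfalso; apply: nq; exists q.
have [Cf HCf] := choice coef.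
pose T := ('I_nA * 'I_nB)%type.
pose w (t : T) (x : X) (g : G) := phi t.1 x * chi t.2 (act x g).
exists (fun g x => \sum_(k < #|{: T}|) Cf (enum_val k) *
  (((phi (enum_val k).1 x)%:C)%C * ((chi (enum_val k).2 (act x g))%:C)%C)).
split.
  exists #|{: T}|, (fun k => Cf (enum_val k)),
    (fun k x => ((phi (enum_val k).1 x)%:C)%C),
    (fun k x => ((chi (enum_val k).2 x)%:C)%C); split => // k; split.
  - split.
      move=> x; apply: (@continuous_comp _ _ _ (phi (enum_val k).1)).
        exact: phic.
      exact: real_complex_continuous.
    suff -> : [set x | ((phi (enum_val k).1 x)%:C)%C != 0 :> Cplx R] =
      [set x | phi (enum_val k).1 x != 0] by [].
    by apply/funext => x /=; rewrite realC_eq0.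
  - split.
      move=> x; apply: (@continuous_comp _ _ _ (chi (enum_val k).2)).
        exact: chic.
      exact: real_complex_continuous.
    suff -> : [set x | ((chi (enum_val k).2 x)%:C)%C != 0 :> Cplx R] =
      [set x | chi (enum_val k).2 x != 0] by [].
    by apply/funext => x /=; rewrite realC_eq0.
move=> g x Kg Lx.
have Pxg : P (x, g) by [].
have Mxg : M (act x g) by exists (x, g).
have sw : \sum_(t : T) w t x g = 1.
  rewrite /w -(pair_bigA _ (fun i j => phi i x * chi j (act x g))) /=.
  by rewrite -big_distrlr /= phi1 // chi1 // mulr1.
rewrite -(big_enum_val (fun t : T => Cf t * (((phi t.1 x)%:C)%C * ((chi t.2 (act x g))%:C)%C))).
have sw' : \sum_(t in {: T}) w t x g = 1.
  by rewrite -sw; apply: eq_bigl => t; rewrite inE.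
under eq_bigr => t _ do rewrite -rmorphM /=.
have -> : u g x = \sum_(t in {: T}) u g x * ((w t x g)%:C)%C.
  by rewrite -mulr_sumr -rmorph_sum /= sw' rmorph1 mulr1.
rewrite -sumrB.
under eq_bigr => t _ do rewrite -mulrBl.
apply: le_trans (ler_norm_sum _ _ _) _.
apply: (@le_trans _ _ (\sum_(t in {: T}) epsC * ((w t x g)%:C)%C)).
  apply: ler_sum => t _; rewrite normrM normC_real (ger0_norm (mulr_ge0 (phi0 _ _) (chi0 _ _))).
  rewrite -/(w t x g).
  case: (eqVneq (w t x g) 0) => [w0|wn0].
    by rewrite w0 raddf0 !mulr0.
  have wge0 : 0 <= ((w t x g)%:C)%C :> R[i] by rewrite ler0c mulr_ge0.

  move: wn0; rewrite /w mulf_eq0 negb_or => /andP[h1 h2].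
  by rewrite ler_wpM2r //; exact: (HCf t (x, g) Pxg h1 h2).
by rewrite -mulr_sumr -rmorph_sum /= sw' rmorph1 mulr1.
Qed.


Lemma dense_free (R : realType) (G X : topologicalType)
  (mul : G -> G -> G) (e : G) (act : X -> G -> X) :
  hausdorff_space G -> locally_compact [set: G] ->
  is_continuous_right_action mul e act ->
  kappa_dense (@alpha_span R G X act) -> free_action e act.
Proof.
move=> hG lcG [a1 aM ac] kd x g hxg; apply: contrapT => gne.
have cl1 : closed [set e] by apply: accessible_closed_set1; exact: hausdorff_accessible.
have ng : ~ [set e] g by [].
have sep := @locally_compact_completely_regular G R lcG hG g [set e] cl1 ng.
pose f := @Urysohn G R [set g] [set e].
have f0 : f g = 0 by apply: (Urysohn_sub0 sep); exists g.
have f1 : f e = 1 by apply: (Urysohn_sub1 sep); exists e.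
have fc : continuous f := @Urysohn_continuous G R _ _.
pose u (h : G) (y : X) : Cplx R := ((f h)%:C)%C.
have uC : CGCX u.
  split; first by move=> h; exact: cst_continuous.
  move=> g0 L eps _ eps0.
  have hf : nbhs g0 [set h | `|f g0 - f h| <= eps].
    exact: (cvgrPdist_le _ _).1 (fc g0) _ eps0.
  apply: filterS hf => h hh y _.
  by rewrite /u -raddfB /= normC_real lecR distrC.
have cK : compact ([set e] `|` [set g]) by apply: compactU; exact: compact_set1.
have e4 : (0 : R) < 4^-1 by rewrite invr_gt0.
have [v [[n [c [g1 [g2 [_ vE]]]]] hv]] := kd u uC _ _ _ cK (@compact_set1 _ x) e4.
have ve : v e x = v g x by rewrite vE /= hxg a1.
have h1 := hv e x (or_introl erefl) erefl.
have h2 := hv g x (or_intror erefl) erefl.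
rewrite ve in h1.
have := ler_distD (v g x) (u e x) (u g x).
rewrite (distrC (v g x)).
move=> /le_trans /(_ (lerD h1 h2)).
rewrite /u -!raddfB /= normC_real -raddfD /= lecR f1 f0 subr0 normr1.
lra.
Qed.

Unset Implicit Arguments.

Theorem mainTheorem17 (R : realType) (G X : topologicalType)
  (mul : G -> G -> G) (inv : G -> G) (e : G) (act : X -> G -> X) :
  is_topological_group mul inv e ->
  hausdorff_space G -> locally_compact [set: G] ->
  hausdorff_space X -> locally_compact [set: X] ->
  is_continuous_right_action mul e act ->
  (free_action e act <-> kappa_dense (@alpha_span R G X act)).
Proof.
move=> tg hG lcG hX lcX ra; split.
  exact: (free_dense tg hX lcX ra).
exact: (dense_free hG lcG ra).
Qed.
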